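(* Let $K_1,K_2$ be infinite compact Hausdorff spaces. Then $C(K_1\times K_2)$ fails the ball fixed point property.
   Context: $C(K)$ is the real Banach space of continuous functions $K\to\mathbb{R}$ with the sup norm. A real Banach space $X$ has the ball fixed point property (BFPP) if every nonexpansive map $T\colon B_X\to B_X$ (i.e. $\|Tx-Ty\|\le\|x-y\|$) has a fixed point, where $B_X$ is the closed unit ball. *)

(* Defs.v *)
From HB Require Import structures.
From mathcomp Require Import all_boot all_order all_algebra.
From mathcomp Require Import all_classical all_reals all_analysis.
Set Implicit Arguments. Unset Strict Implicit. Unset Printing Implicit Defensive.
Import Order.TTheory GRing.Theory Num.Theory.
Import numFieldTopology.Exports numFieldNormedType.Exports.
Local Open Scope classical_set_scope.
Local Open Scope ring_scope.

(* C(K): real-valued continuous functions on K (elements of C(K) are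
   represented by continuous functions K -> R; equality is pointwise). *)
Definition CK (R : realType) (K : topologicalType) : set (K -> R) :=
  [set f : K -> R | continuous f].

Definition supnorm (R : realType) (K : topologicalType) (f : K -> R) : R :=
  sup [set `|f x| | x in [set: K]].

Definition unit_ball (R : realType) (K : topologicalType) : set (K -> R) :=
  [set f | @CK R K f /\ supnorm f <= 1].

Definition nonexpansive_on_ball (R : realType) (K : topologicalType)
    (T : (K -> R) -> (K -> R)) : Prop :=
  (forall f, @unit_ball R K f -> @unit_ball R K (T f)) /\
  (forall f g, @unit_ball R K f -> @unit_ball R K g ->
     supnorm (fun x => T f x - T g x) <= supnorm (fun x => f x - g x)).

Definition BFPP_C (R : realType) (K : topologicalType) : Prop :=
  forall T : (K -> R) -> (K -> R), nonexpansive_on_ball T ->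
    exists f, @unit_ball R K f /\ T f = f.

(* Main.v *)
Require Import Defs.
From HB Require Import structures.
From mathcomp Require Import all_boot all_order all_algebra.
From mathcomp Require Import all_classical all_reals all_analysis.
From mathcomp Require Import lra.
Set Implicit Arguments. Unset Strict Implicit. Unset Printing Implicit Defensive.
Import Order.TTheory GRing.Theory Num.Theory.
Import numFieldTopology.Exports numFieldNormedType.Exports.
Local Open Scope classical_set_scope.
Local Open Scope ring_scope.

Lemma cont_bnd (R : realType) (K : topologicalType) (f : K -> R) :
  compact [set: K] -> continuous f -> exists M, forall x, `|f x| <= M.
Proof.
move=> cK cf.
have : compact (f @` [set: K]).
  apply: continuous_compact => //; exact: continuous_subspaceT.
move/compact_bounded => [M0 [_ HM]].
exists (M0 + 1) => x; apply: (HM (M0 + 1)); first by rewrite ltrDl.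
by exists x.
Qed.

Lemma supnorm_ge (R : realType) (K : topologicalType) (f : K -> R) :
  compact [set: K] -> continuous f -> forall x, `|f x| <= supnorm f.
Proof.
move=> cK cf x; have [M HM] := cont_bnd cK cf.
apply: sup_upper_bound; last by exists x.
split; first by exists `|f x|, x.
by exists M => _ [y _ <-].
Qed.

Lemma supnorm_le (R : realType) (K : topologicalType) (f : K -> R) (M : R) (x0 : K) :
  (forall x, `|f x| <= M) -> supnorm f <= M.
Proof.
move=> H; apply: ge_sup; first by exists `|f x0|, x0.
by move=> _ [y _ <-].
Qed.
Definition clip (R : realType) (u : R) : R :=
  if u <= -1 then -1 else if 1 <= u then 1 else u.

Lemma clip_lip (R : realType) (u v : R) : `|clip u - clip v| <= `|u - v|.
Proof.
have h1 := ler_norm (u - v); have h2 := ler_norm (v - u).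
rewrite distrC in h2.
rewrite /clip; case: ifP => Hu; case: ifP => Hv; rewrite ?subrr ?normr0 //;
  try (case: ifP => Hv'); try (case: ifP => Hu');
  rewrite ?subrr ?normr0 // ler_norml; apply/andP; split; lra.
Qed.

Lemma clip_bnd (R : realType) (u : R) : `|clip u| <= 1.
Proof. rewrite /clip; case: ifP => H1; [|case: ifP => H2]; rewrite ?normrN ?normr1 //.
rewrite ler_norml; apply/andP; split; lra. Qed.

Lemma clip_cont (R : realType) (K : topologicalType) (u : K -> R) :
  continuous u -> continuous (fun p => clip (u p)).
Proof.
move=> cu p; apply/cvgrPdist_lt => e e0.
have := cu p; move/cvgrPdist_lt => /(_ e e0).
apply: filterS => q Hq; apply: le_lt_trans Hq; exact: clip_lip.
Qed.

Section L.
Variables (R : realType) (K : topologicalType).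
Hypotheses (cK : compact [set: K]) (hK : hausdorff_space K) (iK : infinite_set [set: K]).
Hypothesis H : forall a : K -> R, continuous a -> forall x, nbhs x [set y | a y = a x].

Lemma sep (x y : K) : x <> y -> exists a : K -> R, continuous a /\ a x <> a y.
Proof.
move=> xy.
have cr : completely_regular_space K.
  apply: (@normal_completely_regular R).
    exact: compact_normal.
  exact: hausdorff_accessible.
have us : uniform_separator [set x] [set y].
  apply: cr; first exact/accessible_closed_set1/hausdorff_accessible.
  exact: xy.
exists (@Urysohn K R [set x] [set y]); split; first exact: Urysohn_continuous.
have -> : @Urysohn K R [set x] [set y] x = 0 by apply: (Urysohn_sub0 us); exists x.
have -> : @Urysohn K R [set x] [set y] y = 1 by apply: (Urysohn_sub1 us); exists y.
by move/eqP; rewrite eq_sym oner_eq0.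
Qed.

Definition clopen (E : set K) := open E /\ closed E.

Lemma clopen_level (a : K -> R) (c : R) : continuous a -> clopen [set z | a z = c].
Proof.
move=> ca; split.
  rewrite openE => z /= azc; rewrite /interior /=.
  by apply: filterS (H ca z) => w /= ->.
rewrite -openC openE => z /= azc; rewrite /interior /=.
by apply: filterS (H ca z) => w /= ->.
Qed.

Lemma clopenI E F : clopen E -> clopen F -> clopen (E `&` F).
Proof. by move=> [? ?] [? ?]; split; [exact: openI|exact: closedI]. Qed.

Lemma clopenC E : clopen E -> clopen (~` E).
Proof. by move=> [? ?]; split; [rewrite openC|rewrite closedC]. Qed.

Lemma split_clopen E : clopen E -> infinite_set E ->
  exists E', [/\ clopen E', infinite_set E', E' `<=` E & exists z, E z /\ ~ E' z].
Proof.
move=> cE iE.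
have [x Ex] : exists x, E x.
  apply: contrapT => nE; apply: iE.
  have -> : E = set0 by apply/seteqP; split => z // Ez; apply: nE; exists z.
  exact: finite_set0.
have [y [Ey yx]] : exists y, E y /\ x <> y.
  apply: contrapT => nE; apply: iE; apply: (@sub_finite_set _ _ [set x]); last exact: finite_set1.
  move=> z Ez; apply: contrapT => zx; apply: nE; exists z; split => //.
  by move=> xz; apply: zx; rewrite xz.
have [a [ca axy]] := sep yx.
pose C := [set z | a z = a x].
have cC : clopen C by exact: clopen_level.
have [f1|f1] := pselect (finite_set (E `&` C)).
  exists (E `&` ~` C); split.
  - exact: clopenI (clopenC cC).
  - move=> f2; apply: iE; apply: (@sub_finite_set _ _ ((E `&` C) `|` (E `&` ~` C))).
      move=> z Ez; have [Cz|nCz] := pselect (C z); [by left|by right].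
    by rewrite finite_setU.
  - by move=> z [].
  - by exists x; split => // -[_]; apply.
exists (E `&` C); split.
- exact: clopenI.
- exact: f1.
- by move=> z [].
- by exists y; split => // -[_ /esym]; exact: axy.
Qed.

Definition good E := clopen E /\ infinite_set E.

Lemma contra_H : False.
Proof.
have [g Hg] : {g : set K -> set K & forall E, good E ->
    [/\ good (g E), g E `<=` E & exists z, E z /\ ~ g E z]}.
  apply: (@choice _ _ (fun E E' => good E ->
    [/\ good E', E' `<=` E & exists z, E z /\ ~ E' z])) => E.
  have [gE|ngE] := pselect (good E); last by exists E.
  have [E' [? ? ? ?]] := split_clopen gE.1 gE.2.
  by exists E'.
pose En n := iter n g setT.
have gEn : forall n, good (En n).
  elim=> [|n IH]; first by split; [split; [exact: openT|exact: closedT]|exact: iK].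
  by have [] := Hg _ IH.
have dec : forall n, En n.+1 `<=` En n by move=> n; have [] := Hg _ (gEn n).
have decm : forall n m, (n <= m)%N -> En m `<=` En n.
  move=> n; elim=> [|m IH]; first by rewrite leqn0 => /eqP ->.
  rewrite leq_eqVlt => /orP[/eqP -> //|]; rewrite ltnS => /IH.
  by apply: subset_trans; exact: dec.
pose D n := En n `&` ~` En n.+1.
have Dne : forall n, exists z, D n z.
  by move=> n; have [_ _ [z [? ?]]] := Hg _ (gEn n); exists z.
have Duniq : forall n m z, D n z -> D m z -> n = m.
  move=> n m z [Enz nEnz] [Emz nEmz]; apply/eqP; rewrite eqn_leq; apply/andP; split.
    by rewrite leqNgt; apply/negP => /decm /(_ _ Enz).
  by rewrite leqNgt; apply/negP => /decm /(_ _ Emz).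
have Dor : forall z, (forall n, En n z) \/ exists n, D n z.
  move=> z; have [all|] := pselect (forall n, En n z); first by left.
  move=> /existsNP [m nEm]; right; elim: m nEm => [|m IH] nEm; first by exfalso; apply: nEm.
  have [Emz|nEmz] := pselect (En m z); first by exists m.
  exact: IH.
pose a z : R := if pselect (exists n, D n z) is left e
  then ((projT1 (cid e)).+1%:R)^-1 else 0.
have aD : forall n z, D n z -> a z = (n.+1%:R)^-1.
  move=> n z Dnz; rewrite /a; case: pselect => [e|]; last by case; exists n.
  by case: cid => m /= Dmz; rewrite (Duniq _ _ _ Dmz Dnz).
have aC : forall z, (forall n, En n z) -> a z = 0.
  move=> z Ez; rewrite /a; case: pselect => [e|//]; have [n [_ nE]] := e; by case: (nE (Ez _)).
have opE : forall n, open (En n) by move=> n; exact: (gEn n).1.1.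
have clE : forall n, closed (En n) by move=> n; exact: (gEn n).1.2.
have Dopen : forall n, open (D n).
  by move=> n; apply: openI; [exact: opE|rewrite openC; exact: clE].
have ca : continuous a.
  move=> z; apply/cvgrPdist_lt => e e0.
  case: (Dor z) => [Ez | [n Dnz]].
    have [N HN] := ltr_add_invr e0; rewrite add0r in HN.
    have : nbhs z (En N) by apply: open_nbhs_nbhs; split => //.
    apply: filterS => w ENw; rewrite (aC z Ez) sub0r normrN.
    case: (Dor w) => [Ew|[m Dmw]]; first by rewrite aC // normr0.
    rewrite (aD m w Dmw).
    have NM : (N <= m)%N.
      rewrite leqNgt; apply/negP => /decm /(_ _ ENw); by case: Dmw.
    rewrite ger0_norm ?invr_ge0 ?ler0n //; apply: le_lt_trans HN.
    by rewrite lef_pV2 ?ler_nat ?posrE ?ltr0Sn.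
  have : nbhs z (D n) by apply: open_nbhs_nbhs.
  by apply: filterS => w Dnw; rewrite (aD _ _ Dnz) (aD _ _ Dnw) subrr normr0.
have la := H ca.
have [p Dp] : exists p : nat -> K, forall n, D n (p n).
  by have [f Hf] := @choice _ _ (fun n z => D n z) Dne; exists f.
have PF : ProperFilter (fmap p eventually) by exact: fmap_proper_filter.
have [q [_ clq]] := cK PF filterT.
have Aev : forall N, (fmap p eventually) [set p m | m in [set m | (N <= m)%N]].
  by move=> N; exists N => // m /= Nm; exists m.
have [w [[m1 _ <-] /= e1]] := clq _ _ (Aev 0%N) (la q).
have [w' [[m2 m12 <-] /= e2]] := clq _ _ (Aev m1.+1) (la q).
move: e2; rewrite -e1 (aD _ _ (Dp m1)) (aD _ _ (Dp m2)) => /invr_inj /eqP.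
rewrite eqr_nat eqSS => /eqP m21; move: m12; rewrite /= m21 ltnn.
by [].
Qed.

End L.

Lemma L_exists (R : realType) (K : topologicalType) :
  compact [set: K] -> hausdorff_space K -> infinite_set [set: K] ->
  exists (a : K -> R) (x : K), continuous a /\ a x = 0 /\
    (forall U, nbhs x U -> exists y, U y /\ 0 < a y).
Proof.
move=> cK hK iK; apply: contrapT => nL.
apply: (@contra_H R K cK hK iK) => a ca x.
apply: contrapT => nN; apply: nL.
exists (fun y => `|a y - a x|), x; split.
  move=> z; apply: cvg_norm.
  by apply: cvgB; [exact: ca|exact: cvg_cst].
split; first by rewrite subrr normr0.
move=> U nU; apply: contrapT => nE; apply: nN.
apply: filterS nU => y Uy; apply/eqP; rewrite -subr_eq0 -normr_eq0.
rewrite eq_le normr_ge0 andbT leNgt; apply/negP => H0; apply: nE.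
by exists y.
Qed.

Theorem mainTheorem4 (R : realType) (K1 K2 : topologicalType) :
  compact [set: K1] -> hausdorff_space K1 -> infinite_set [set: K1] ->
  compact [set: K2] -> hausdorff_space K2 -> infinite_set [set: K2] ->
  ~ BFPP_C R (K1 * K2)%type.
Proof.
move=> c1 h1 i1 c2 h2 i2 bfpp.
have [a [x [ca [ax0 ax]]]] := L_exists R c1 h1 i1.
have [b [y [cb [by0 byy]]]] := L_exists R c2 h2 i2.
have cK : compact [set: (K1 * K2)%type].
  by rewrite -setXTT; apply: compact_setX.
pose h := fun p : K1 * K2 => a p.1 - b p.2.
have ch : continuous h.
  move=> p; apply: cvgB.
    apply: continuous_comp; [exact: cvg_fst | exact: ca].
  apply: continuous_comp; [exact: cvg_snd | exact: cb].
pose T := fun (f : K1 * K2 -> R) p => clip (f p + h p).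
have Tball : forall f, unit_ball f -> unit_ball (T f).
  move=> f [cf _]; split.
    by apply: clip_cont => p; apply: cvgD; [exact: cf|exact: ch].
  by apply: (@supnorm_le _ _ _ _ (x, y)) => p; exact: clip_bnd.
have [f [[cf nf] Tf]] : exists f, unit_ball f /\ T f = f.
  apply: bfpp; split => // f g [cf _] [cg _].
  apply: (@supnorm_le _ _ _ _ (x, y)) => p.
  apply: le_trans (clip_lip _ _) _.
  have cfg : continuous (fun p => f p - g p).
    by move=> q; apply: cvgB; [exact: cf|exact: cg].
  apply: le_trans (supnorm_ge cK cfg p).
  by rewrite opprD addrA addrAC addrK.
have fb : forall p, `|f p| <= 1.
  by move=> p; apply: le_trans (supnorm_ge cK cf p) nf.
have Tfp : forall p, clip (f p + h p) = f p.
  by move=> p; rewrite -[in RHS]Tf.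
have fpos : forall p, 0 < h p -> f p = 1.
  move=> p hp; have := fb p; have := Tfp p; rewrite /clip.
  case: ifP => H1; [move=> E; rewrite ler_norml => /andP[? ?]; lra|].
  case: ifP => H2 E; rewrite ler_norml => /andP[? ?]; [lra|].
  move/negbT: H2; rewrite -ltNge => ?; lra.
have fneg : forall p, h p < 0 -> f p = -1.
  move=> p hp; have := fb p; have := Tfp p; rewrite /clip.
  case: ifP => H1; [move=> E; rewrite ler_norml => /andP[? ?]; lra|].
  move/negbT: H1; rewrite -ltNge => H1.
  case: ifP => H2 E; rewrite ler_norml => /andP[? ?]; lra.
have := cf (x, y); move/cvgrPdist_lt => /(_ 1 ltr01).
case=> -[U V] /= [nU nV] UVW.
have [s [Us as0]] := ax U nU; have [t [Vt bt0]] := byy V nV.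
have := UVW (s, y) (conj Us (nbhs_singleton nV)).
have := UVW (x, t) (conj (nbhs_singleton nU) Vt).
rewrite /= (fpos (s, y)); last by rewrite /h /= by0 subr0.
rewrite (fneg (x, t)); last by rewrite /h /= ax0 sub0r oppr_lt0.
move=> H1 H2; have := ler_norm (f (x, y) - -1); have := ler_norm (- (f (x, y) - 1)).
rewrite normrN; lra.
Qed.
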